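(* Let $A\in\mathbb{R}^{m\times n}$ and $b\in\mathbb{R}^m$ be such that the linear system $Ax=b$ is consistent, let $\ell$ be a positive integer, and let $x^0\in\operatorname{Range}(A^\top)$. Let $\{S_k\}_{k\ge 0}\subset\mathbb{R}^{m\times q}$ be matrices and let $\{x^k\}_{k\ge1}$ be defined recursively by $$x^{k+1}=\arg\min_{x\in\Pi_k}\|x-A^\dagger b\|_2^2,\qquad \Pi_k=\operatorname{aff}\{x^{j_k},\ldots,x^k,\;x^k-A^\top S_kS_k^\top(Ax^k-b)\},$$ where $j_k=\max\{k-\ell+1,0\}$. Define $$M_k=\big(x^{j_k}-x^k,\ \ldots,\ x^{k-1}-x^k,\ -A^\top S_kS_k^\top(Ax^k-b)\big)\in\mathbb{R}^{n\times(k-j_k+1)}$$ (when $j_k=k$, $M_k$ consists only of its last column). If $S_i^\top(Ax^i-b)\neq 0$ for $i=0,\ldots,k$, then $M_k$ has full column rank.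
   Context: $A^\dagger$ denotes the Moore–Penrose pseudoinverse of $A$. For vectors $y^1,\dots,y^p$, $\operatorname{aff}\{y^1,\dots,y^p\}=\{\sum_i\alpha_iy^i:\sum_i\alpha_i=1,\ \alpha_i\in\mathbb{R}\}$ is their affine hull. The minimizer of the strictly convex function $\|x-A^\dagger b\|_2^2$ over the affine set $\Pi_k$ is the orthogonal projection of $A^\dagger b$ onto $\Pi_k$. *)

(* Defs.v *)
From HB Require Import structures.
From mathcomp Require Import all_boot all_order all_algebra.
From mathcomp Require Import reals.
Unset Printing Implicit Defensive.
Import Order.TTheory GRing.Theory Num.Theory.
Local Open Scope ring_scope.

(* P is the Moore--Penrose pseudoinverse of A (the four Penrose equations;
   such a P exists and is unique). *)
Definition is_pinv (R : realType) (m n : nat) (A : 'M[R]_(m, n)) (P : 'M[R]_(n, m)) :=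
  [/\ A *m P *m A = A, P *m A *m P = P,
      (A *m P)^T = A *m P & (P *m A)^T = P *m A].
Arguments is_pinv {R m n} A P.

Definition sqnorm (R : realType) (n : nat) (v : 'cV[R]_n) : R :=
  \sum_(i < n) v i 0 ^+ 2.
Arguments sqnorm {R n} v.

Definition aff (R : realType) (n p : nat) (y : 'I_p -> 'cV[R]_n) (v : 'cV[R]_n) : Prop :=
  exists a : 'I_p -> R, \sum_(i < p) a i = 1 /\ v = \sum_(i < p) a i *: y i.
Arguments aff {R n p} y v.

Definition is_argmin (T R : Type) (le : R -> R -> Prop) (P : T -> Prop) (f : T -> R) (v : T) :=
  P v /\ forall w, P w -> le (f v) (f w).
Arguments is_argmin {T R} le P f v.

(* j_k = max{k - l + 1, 0} (truncated nat subtraction) *)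
Definition jk (l k : nat) : nat := (k.+1 - l)%N.

Definition dir (R : realType) (m n q : nat) (A : 'M[R]_(m, n)) (b : 'cV[R]_m)
  (S : nat -> 'M[R]_(m, q)) (x : nat -> 'cV[R]_n) (k : nat) : 'cV[R]_n :=
  A^T *m (S k *m ((S k)^T *m (A *m x k - b))).
Arguments dir {R m n q} A b S x k.

Definition Pi_gen (R : realType) (m n q : nat) (l : nat) (A : 'M[R]_(m, n)) (b : 'cV[R]_m)
  (S : nat -> 'M[R]_(m, q)) (x : nat -> 'cV[R]_n) (k : nat) (i : 'I_(k - jk l k + 2)) : 'cV[R]_n :=
  if (i < k - jk l k + 1)%N then x (jk l k + i)%N else x k - dir A b S x k.
Arguments Pi_gen {R m n q} l A b S x k i.

Definition Mk (R : realType) (m n q : nat) (l : nat) (A : 'M[R]_(m, n)) (b : 'cV[R]_m)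
  (S : nat -> 'M[R]_(m, q)) (x : nat -> 'cV[R]_n) (k : nat) : 'M[R]_(n, k - jk l k + 1) :=
  \matrix_(r < n, c < k - jk l k + 1)
    (if (c < k - jk l k)%N then (x (jk l k + c)%N - x k) r 0 else (- dir A b S x k) r 0).

Arguments Mk {R m n q} l A b S x k.

(* Main.v *)
Require Import Defs.
From HB Require Import structures.
From mathcomp Require Import all_boot all_order all_algebra.
From mathcomp Require Import reals.
From mathcomp Require Import ring lra zify.
Import Order.TTheory GRing.Theory Num.Theory.
Local Open Scope ring_scope.

Section H.
Context {R : realType}.

Definition dot (n : nat) (u v : 'cV[R]_n) : R := (u^T *m v) 0 0.
Arguments dot {n}.

Lemma dotC n (u v : 'cV[R]_n) : dot u v = dot v u.
Proof.
by rewrite /dot -[v^T *m u]trmxK trmx_mul trmxK [in RHS]mxE.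
Qed.

Lemma dotDr n (u v w : 'cV[R]_n) : dot u (v + w) = dot u v + dot u w.
Proof. by rewrite /dot mulmxDr mxE. Qed.
Lemma dotZr n (u v : 'cV[R]_n) a : dot u (a *: v) = a * dot u v.
Proof. by rewrite /dot -scalemxAr mxE. Qed.
Lemma dotNr n (u v : 'cV[R]_n) : dot u (- v) = - dot u v.
Proof. by rewrite /dot mulmxN mxE. Qed.
Lemma dotBr n (u v w : 'cV[R]_n) : dot u (v - w) = dot u v - dot u w.
Proof. by rewrite dotDr dotNr. Qed.
Lemma dotDl n (u v w : 'cV[R]_n) : dot (v + w) u = dot v u + dot w u.
Proof. by rewrite dotC dotDr !(dotC _ u). Qed.
Lemma dotZl n (u v : 'cV[R]_n) a : dot (a *: v) u = a * dot v u.
Proof. by rewrite dotC dotZr dotC. Qed.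
Lemma dotNl n (u v : 'cV[R]_n) : dot (- v) u = - dot v u.
Proof. by rewrite dotC dotNr dotC. Qed.
Lemma dotBl n (u v w : 'cV[R]_n) : dot (v - w) u = dot v u - dot w u.
Proof. by rewrite dotDl dotNl. Qed.
Lemma dot_mulmx m n (B : 'M[R]_(m, n)) u v : dot u (B *m v) = dot (B^T *m u) v.
Proof. by rewrite /dot trmx_mul trmxK mulmxA. Qed.

Lemma sqnorm_dot n (v : 'cV[R]_n) : sqnorm v = dot v v.
Proof. by rewrite /sqnorm /dot mxE; apply: eq_bigr => i _; rewrite mxE expr2. Qed.

Lemma dot_eq0 n (v : 'cV[R]_n) : dot v v = 0 -> v = 0.
Proof.
rewrite -sqnorm_dot /sqnorm => /psumr_eq0P H.
have {}H := H (fun i _ => sqr_ge0 _).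
apply/matrixP => i j; rewrite ord1 mxE.
have /eqP := H i isT; by rewrite sqrf_eq0 => /eqP.
Qed.

Lemma first_order (a s : R) : 0 <= s -> (forall t, 0 <= 2 * t * a + t ^+ 2 * s) -> a = 0.
Proof.
move=> hs H.
set u := a / (s + 1).
have hs1 : s + 1 != 0 by rewrite gt_eqF // ltr_wpDl.
have ha : a = u * (s + 1) by rewrite /u divfK.
have := H (- u).
have := mulr_ge0 (sqr_ge0 u) hs.
move=> h1 h2.
have hu : u ^+ 2 <= 0 by rewrite ha in h2; nra.
have : u = 0. apply/eqP; rewrite -sqrf_eq0 eq_le hu sqr_ge0 //.
by rewrite ha => ->; rewrite mul0r.
Qed.


Lemma dot_ge0 n (v : 'cV[R]_n) : 0 <= dot v v.
Proof. by rewrite -sqnorm_dot /sqnorm sumr_ge0 // => i _; apply: sqr_ge0. Qed.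

Lemma aff_gen p n (y : 'I_p -> 'cV[R]_n) i : aff y (y i).
Proof.
exists (fun j => (j == i)%:R); split.
  by rewrite (bigD1 i) //= eqxx big1 ?addr0 // => j /negbTE ->.
by rewrite (bigD1 i) //= eqxx scale1r big1 ?addr0 // => j /negbTE ->; rewrite scale0r.
Qed.

Lemma aff_line p n (y : 'I_p -> 'cV[R]_n) v w t :
  aff y v -> aff y w -> aff y (v + t *: (w - v)).
Proof.
move=> [a [ha hv]] [c [hc hw]].
exists (fun i => (1 - t) * a i + t * c i); split.
  rewrite big_split /= -!mulr_sumr ha hc !mulr1; ring.
rewrite (eq_bigr (fun i => (1 - t) *: (a i *: y i) + t *: (c i *: y i))); last first.
  by move=> i _; rewrite !scalerA -scalerDl.
rewrite big_split /= -!scaler_sumr -hv -hw.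
by rewrite scalerBl scale1r scalerBr addrAC -addrA [t *: w - _]addrC.
Qed.

Lemma argmin_orth n p (y : 'I_p -> 'cV[R]_n) (xs X : 'cV[R]_n) :
  is_argmin (fun u v : R => u <= v) (aff y) (fun v => sqnorm (v - xs)) X ->
  forall w, aff y w -> dot (X - xs) (w - X) = 0.
Proof.
move=> [hX hmin] w hw.
apply: (first_order _ _ (dot_ge0 _ (w - X))) => t.
have := hmin _ (aff_line _ _ _ _ _ t hX hw).
have -> : X + t *: (w - X) - xs = (X - xs) + t *: (w - X) by rewrite addrAC.
rewrite !sqnorm_dot; move: (X - xs) (w - X) => e d.
rewrite !(dotDl, dotDr, dotZl, dotZr) (dotC _ d e).
move=> h; nra.
Qed.

Lemma dot0r n (u : 'cV[R]_n) : dot u 0 = 0.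
Proof. by rewrite /dot mulmx0 mxE. Qed.

End H.
Arguments dot {R n}.

Theorem proposition3p1 (R : realType) (m n q l : nat)
  (A : 'M[R]_(m, n)) (b : 'cV[R]_m) (Adag : 'M[R]_(n, m))
  (S : nat -> 'M[R]_(m, q)) (x : nat -> 'cV[R]_n) :
  is_pinv A Adag ->
  (exists z : 'cV[R]_n, A *m z = b) ->
  (0 < l)%N ->
  (exists y : 'cV[R]_m, x 0%N = A^T *m y) ->
  (forall k : nat,
     is_argmin (fun u v : R => u <= v) (aff (Pi_gen l A b S x k))
       (fun v => sqnorm (v - Adag *m b)) (x k.+1)) ->
  forall k : nat,
    (forall i : nat, (i <= k)%N -> (S i)^T *m (A *m x i - b) != 0) ->
    \rank (Mk l A b S x k) = (k - jk l k + 1)%N.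
Proof.
move=> hP [z hz] hl _ hmin k hS.
pose xs := Adag *m b.
have hAxs : A *m xs = b.
  by case: hP => h1 _ _ _; rewrite /xs -hz !mulmxA h1.
pose e i := x i - xs.
pose d i := dir A b S x i.
have hed : forall i, (i <= k)%N -> dot (e i) (d i) != 0.
  move=> i hi; rewrite /d /dir dot_mulmx trmxK /e mulmxBr hAxs dot_mulmx.
  by apply/negP => /eqP/dot_eq0; apply/eqP; exact: hS.
have orth : forall i w, aff (Pi_gen l A b S x i) w -> dot (e i.+1) (w - x i.+1) = 0.
  by move=> i; exact: (argmin_orth _ _ _ _ _ (hmin i)).
have hgen : forall i a, (jk l i <= a <= i)%N -> aff (Pi_gen l A b S x i) (x a).
  move=> i a /andP[h1 h2].
  have hlt : (a - jk l i < i - jk l i + 2)%N by lia.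
  have := aff_gen _ _ (Pi_gen l A b S x i) (Ordinal hlt).
  rewrite /Pi_gen /= ifT; last by lia.
  by rewrite subnKC.
have hgend : forall i, aff (Pi_gen l A b S x i) (x i - d i).
  move=> i.
  have hlt : (i - jk l i + 1 < i - jk l i + 2)%N by lia.
  have := aff_gen _ _ (Pi_gen l A b S x i) (Ordinal hlt).
  by rewrite /Pi_gen /= ltnn.
have exe : forall a c, x a - x c = e a - e c.
  by move=> a c; rewrite /e opprB addrA subrK.
set J := jk l k.
have hJk : (J <= k)%N by rewrite /J /jk; lia.
have G : forall a c, (J <= a)%N -> (a <= c <= k)%N -> dot (e c) (e a) = dot (e c) (e c).
  move=> a c ha /andP[hac hck].
  case: (ltngtP a c) hac => // [hlt _|-> //].
  case: c hlt hck => // c hlt hck.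
  have hh : (jk l c <= a <= c)%N by apply/andP; split; rewrite /J /jk in ha *; lia.
  have := orth c (x a) (hgen c a hh).
  by rewrite exe dotBr => /eqP; rewrite subr_eq0 => /eqP ->.
have G' : forall a c, (J <= a)%N -> (a <= c <= k)%N -> dot (e a) (e c) = dot (e c) (e c).
  by move=> a c ha hac; rewrite dotC; apply: G.
have hd : forall i, (i < k)%N -> dot (e i - e i.+1) (e i - e i.+1) != 0.
  move=> i hi; apply/negP => /eqP /dot_eq0 h0.
  have := orth i _ (hgend i).
  have -> : x i - d i - x i.+1 = (e i - e i.+1) - d i.
    by rewrite addrAC exe.
  rewrite h0 sub0r dotNr.
  move/subr0_eq: h0 => <-.
  move/eqP; rewrite oppr_eq0; apply/negP; apply: hed; lia.
set p := (k - J)%N.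
have dB4 : forall a b c d : 'cV[R]_n, dot (a - b) (c - d) = dot a c - dot a d - dot b c + dot b d.
  by move=> a1 b1 c1 d1; rewrite dotBl !dotBr; ring.
have hJp : (J + p = k)%N by rewrite /p; lia.
pose colv (c : nat) := if (c < p)%N then e (J + c)%N - e k else - d k.
have hcol : forall (w : 'cV_n) (u : 'cV_(p + 1)),
    dot w (Mk l A b S x k *m u) = \sum_(c < p + 1) u c 0 * dot w (colv c).
  move=> w u; rewrite /dot mulmxA mxE; apply: eq_bigr => c _; rewrite mulrC; congr (_ * _).
  rewrite !mxE; apply: eq_bigr => r _; rewrite !mxE /colv.
  congr (_ * _); rewrite /colv /p /J /e /d; case: ifP => _; rewrite !mxE //; ring.
rewrite -mxrank_tr; apply/eqP; apply: inj_row_free => v hv.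
have hu : Mk l A b S x k *m v^T = 0.
  by have := congr1 trmx hv; rewrite trmx_mul trmxK trmx0.
suff : v^T = 0 by move/(congr1 trmx); rewrite trmxK trmx0.
move: hu; move: (v^T) => u hu.
have hpl : (p < p + 1)%N by rewrite addn1.
pose last := Ordinal hpl.
have hlast : u last 0 = 0.
  have := hcol (e k) u; rewrite hu dot0r (bigD1 last) //= big1 ?addr0.
    rewrite /colv /= ltnn dotNr => /esym /eqP; rewrite mulf_eq0 oppr_eq0.
    by case/orP => /eqP // h; move: (hed k (leqnn k)); rewrite h eqxx.
  move=> c hc.
  have hcp : (c < p)%N.
    have h1 := ltn_ord c.
    have h2 : (nat_of_ord c != p).
      by move: hc; apply: contra => /eqP h; apply/eqP/val_inj.
    lia.
  rewrite /colv hcp dotBr G ?subrr ?mulr0 //; first by rewrite leq_addr.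
  by apply/andP; split => //; lia.
have core : forall t : 'I_(p + 1), (t < p)%N ->
    (forall c : 'I_(p + 1), (c < t)%N -> u c 0 = 0) -> u t 0 = 0.
  move=> t htp IH.
  pose i := (J + t)%N.
  have hi1 : (i < k)%N by rewrite /i; lia.
  have := hcol (e i - e i.+1) u; rewrite hu dot0r (bigD1 t) //= big1 ?addr0.
    have hJi : (J <= i)%N by rewrite /i leq_addr.
    have g1 : dot (e i) (e k) = dot (e k) (e k) by apply: G' => //; lia.
    have g2 : dot (e i.+1) (e k) = dot (e k) (e k) by apply: G' => //; lia.
    have g3 : dot (e i) (e i.+1) = dot (e i.+1) (e i.+1) by apply: G' => //; lia.
    have g4 : dot (e i.+1) (e i) = dot (e i.+1) (e i.+1) by apply: G => //; lia.
    have -> : dot (e i - e i.+1) (colv t) = dot (e i - e i.+1) (e i - e i.+1).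
      rewrite /colv htp -/i dB4 (dB4 (e i)) g1 g2 g3 g4; ring.
    move=> /esym /eqP; rewrite mulf_eq0 => /orP [/eqP //|h].
    by move: (hd i hi1); rewrite h.
  move=> c hct.
  case: (ltngtP c t) => [hc|hc|hc].
  - by rewrite IH // mul0r.
  - case hcp : (c < p)%N.
      have hJc : (J <= J + c)%N by rewrite leq_addr.
      have g1 : dot (e i) (e k) = dot (e k) (e k) by apply: G' => //; rewrite /i; lia.
      have g2 : dot (e i.+1) (e k) = dot (e k) (e k) by apply: G' => //; rewrite /i; lia.
      have g3 : dot (e i) (e (J + c)%N) = dot (e (J + c)%N) (e (J + c)%N) by apply: G' => //; rewrite /i; lia.
      have g4 : dot (e i.+1) (e (J + c)%N) = dot (e (J + c)%N) (e (J + c)%N) by apply: G' => //; rewrite /i; lia.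
      rewrite /colv hcp dB4 g1 g2 g3 g4.
      have -> : forall a b0 : R, a - b0 - a + b0 = 0 by move=> *; ring.
      by rewrite mulr0.
    have -> : c = last.
      by apply: val_inj => /=; have := ltn_ord c; lia.
    by rewrite hlast mul0r.
  - by move: hct; rewrite (_ : c = t) ?eqxx //; apply: val_inj.
have all0 : forall t : nat, (t < p)%N -> forall c : 'I_(p + 1), (c <= t)%N -> u c 0 = 0.
  elim=> [|t IHt] htp c hc.
    apply: core; first by move: hc; rewrite leqn0 => /eqP ->.
    by move=> c'; move: hc; rewrite leqn0 => /eqP ->.
  move: hc; rewrite leq_eqVlt => /orP [/eqP hc|hc].
    apply: core; first by rewrite hc.
    by move=> c' hc'; apply: IHt; [lia | rewrite hc in hc'; lia].
  by apply: IHt; lia.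
apply/matrixP => c j; rewrite ord1 mxE.
case hcp : (c < p)%N; first by apply: (all0 c).
have -> : c = last.
  by apply: val_inj => /=; have := ltn_ord c; lia.
exact: hlast.
Qed.
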